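(* If $f:[-1,1]\to\mathbb{R}$ is continuous, then the set of sequential cord derivatives of $f$ at $0$ is either the empty set, a single point, or a closed interval in $\overline{\mathbb{R}}$.
   Context: $\overline{\mathbb{R}}=\mathbb{R}\cup\{\pm\infty\}$. $L\in\overline{\mathbb{R}}$ is a sequential cord derivative of $f$ at $0$ if there are sequences $h_n>0$, $k_n>0$ in $[-1,1]$ with $h_n\to0$, $k_n\to0$, and $\frac{f(h_n)-f(-k_n)}{h_n+k_n}\to L$ as $n\to\infty$. A closed interval in $\overline{\mathbb{R}}$ is a set $[a,b]=\{t\in\overline{\mathbb{R}}:a\le t\le b\}$ with $a<b$ in $\overline{\mathbb{R}}$. *)

(* Defs.v *)
From Stdlib Require Import Reals.
From Coquelicot Require Import Coquelicot.
Open Scope R_scope.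

Definition seq_cord_derivative (f : R -> R) (L : Rbar) : Prop :=
  exists h k : nat -> R,
    (forall n, 0 < h n /\ h n <= 1) /\
    (forall n, 0 < k n /\ k n <= 1) /\
    is_lim_seq h 0 /\ is_lim_seq k 0 /\
    is_lim_seq (fun n => (f (h n) - f (- k n)) / (h n + k n)) L.

Definition continuous_on_m11 (f : R -> R) : Prop :=
  forall x, -1 <= x <= 1 ->
    filterlim f (within (fun y => -1 <= y <= 1) (locally x)) (locally (f x)).

Definition Rbar_closed_interval (a b : Rbar) : Rbar -> Prop :=
  fun t => Rbar_le a t /\ Rbar_le t b.

(* Main.v *)
Require Import Defs.
From Stdlib Require Import Reals Lra Lia Classical IndefiniteDescription.
From Coquelicot Require Import Coquelicot.
Open Scope R_scope.

Lemma ball_iff (x e y : R) : ball x e y <-> Rabs (y - x) < e.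
Proof. split; intros H; exact H. Qed.

Lemma lub_near (S : Rbar -> Prop) (L0 b : Rbar) : S L0 -> Rbar_is_lub S b ->
  forall P, Rbar_locally b P -> exists L', S L' /\ Rbar_locally L' P.
Proof.
  intros H0 [Hub Hl] P HP.
  destruct b as [r| |].
  - destruct HP as [eps Heps].
    destruct (classic (exists L', S L' /\ Rbar_lt (r - eps) L')) as [[L' [HS Hlt]]|Hn].
    + exists L'; split; auto.
      pose proof (Hub L' HS) as Hle.
      destruct L' as [l'| |]; simpl in *; try contradiction.
      assert (Hp : 0 < eps - (r - l')) by lra.
      exists (mkposreal _ Hp); intros y Hy; apply Heps.
      rewrite ball_iff in *; simpl in *.
      unfold Rabs in *; destruct Rcase_abs; destruct Rcase_abs; lra.
    + exfalso.
      assert (Hb : Rbar_is_upper_bound S (r - eps)).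
      { intros x Hx. apply Rbar_not_lt_le. intros Hc. apply Hn; eauto. }
      specialize (Hl _ Hb). simpl in Hl. destruct eps; simpl in *; lra.
  - destruct HP as [M HM].
    destruct (classic (exists L', S L' /\ Rbar_lt M L')) as [[L' [HS Hlt]]|Hn].
    + exists L'; split; auto.
      destruct L' as [l'| |]; simpl in *; try contradiction.
      * assert (Hp : 0 < l' - M) by lra.
        exists (mkposreal _ Hp); intros y Hy; apply HM.
        rewrite ball_iff in *; simpl in *.
        unfold Rabs in *; destruct Rcase_abs; lra.
      * exists M; auto.
    + exfalso.
      assert (Hb : Rbar_is_upper_bound S M).
      { intros x Hx. apply Rbar_not_lt_le. intros Hc. apply Hn; eauto. }
      specialize (Hl _ Hb). simpl in Hl. auto.
  - exists L0; split; auto.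
    pose proof (Hub L0 H0) as Hle. destruct L0; simpl in *; try contradiction; auto.
Qed.

Lemma glb_near (S : Rbar -> Prop) (L0 b : Rbar) : S L0 -> Rbar_is_glb S b ->
  forall P, Rbar_locally b P -> exists L', S L' /\ Rbar_locally L' P.
Proof.
  intros H0 [Hub Hl] P HP.
  destruct b as [r| |].
  - destruct HP as [eps Heps].
    destruct (classic (exists L', S L' /\ Rbar_lt L' (r + eps))) as [[L' [HS Hlt]]|Hn].
    + exists L'; split; auto.
      pose proof (Hub L' HS) as Hle.
      destruct L' as [l'| |]; simpl in *; try contradiction.
      assert (Hp : 0 < eps - (l' - r)) by lra.
      exists (mkposreal _ Hp); intros y Hy; apply Heps.
      rewrite ball_iff in *; simpl in *.
      unfold Rabs in *; destruct Rcase_abs; destruct Rcase_abs; lra.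
    + exfalso.
      assert (Hb : Rbar_is_lower_bound S (r + eps)).
      { intros x Hx. apply Rbar_not_lt_le. intros Hc. apply Hn; eauto. }
      specialize (Hl _ Hb). simpl in Hl. destruct eps; simpl in *; lra.
  - exists L0; split; auto.
    pose proof (Hub L0 H0) as Hle. destruct L0; simpl in *; try contradiction; auto.
  - destruct HP as [M HM].
    destruct (classic (exists L', S L' /\ Rbar_lt L' M)) as [[L' [HS Hlt]]|Hn].
    + exists L'; split; auto.
      destruct L' as [l'| |]; simpl in *; try contradiction.
      * assert (Hp : 0 < M - l') by lra.
        exists (mkposreal _ Hp); intros y Hy; apply HM.
        rewrite ball_iff in *; simpl in *.
        unfold Rabs in *; destruct Rcase_abs; lra.
      * exists M; auto.
    + exfalso.
      assert (Hb : Rbar_is_lower_bound S M).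
      { intros x Hx. apply Rbar_not_lt_le. intros Hc. apply Hn; eauto. }
      specialize (Hl _ Hb). simpl in Hl. auto.
Qed.

Lemma structure (S : Rbar -> Prop)
 (Hcl : forall L, (forall P, Rbar_locally L P -> exists L', S L' /\ Rbar_locally L' P) -> S L)
 (Hcv : forall a b L, S a -> S b -> Rbar_lt a L -> Rbar_lt L b -> S L) :
 (forall L, ~ S L) \/ (exists a, forall L, S L <-> L = a) \/
 (exists a b, Rbar_lt a b /\ forall L, S L <-> Rbar_closed_interval a b L).
Proof.
  destruct (classic (exists L0, S L0)) as [[L0 H0]|Hn].
  2: { left; intros L HL; apply Hn; eauto. }
  right.
  destruct (Rbar_ex_glb S) as [a Ha].
  destruct (Rbar_ex_lub S) as [b Hb].
  assert (Sa : S a) by (apply Hcl; apply (glb_near S L0); auto).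
  assert (Sb : S b) by (apply Hcl; apply (lub_near S L0); auto).
  assert (Hab : Rbar_le a b).
  { apply Rbar_le_trans with L0; [apply (proj1 Ha) | apply (proj1 Hb)]; auto. }
  destruct (Rbar_le_lt_or_eq_dec a b Hab) as [Hlt|Heq].
  - right. exists a, b; split; auto.
    intros L; split.
    + intros HL; split; [apply (proj1 Ha) | apply (proj1 Hb)]; auto.
    + intros [H1 H2].
      destruct (Rbar_le_lt_or_eq_dec a L H1) as [H1'|E1]; [|subst; auto].
      destruct (Rbar_le_lt_or_eq_dec L b H2) as [H2'|E2]; [|subst; auto].
      apply (Hcv a b L); auto.
  - left. exists a. intros L; split.
    + intros HL. apply Rbar_le_antisym; [|apply (proj1 Ha); auto].
      subst b. apply (proj1 Hb); auto.
    + intros ->; auto.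
Qed.
Definition Q (f : R -> R) (h k : R) := (f h - f (- k)) / (h + k).

Definition C (f : R -> R) (L : Rbar) := forall P, Rbar_locally L P -> forall d, 0 < d ->
  exists h k, (0 < h < d /\ h <= 1) /\ (0 < k < d /\ k <= 1) /\ P (Q f h k).

Lemma small_pos (x d : R) : Rabs (x - 0) < d -> 0 < x -> x < d.
Proof. intros H Hx. rewrite Rminus_0_r, Rabs_pos_eq in H; lra. Qed.

Lemma A1 f L : seq_cord_derivative f L -> C f L.
Proof.
  intros [h [k [Hh [Hk [Lh [Lk LQ]]]]]] P HP d Hd.
  apply is_lim_seq_spec in Lh. apply is_lim_seq_spec in Lk.
  destruct (Lh (mkposreal d Hd)) as [N1 H1].
  destruct (Lk (mkposreal d Hd)) as [N2 H2].
  destruct (LQ P HP) as [N3 H3].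
  exists (h (N1 + N2 + N3)%nat), (k (N1 + N2 + N3)%nat).
  specialize (H1 (N1 + N2 + N3)%nat ltac:(lia)).
  specialize (H2 (N1 + N2 + N3)%nat ltac:(lia)).
  specialize (H3 (N1 + N2 + N3)%nat ltac:(lia)).
  destruct (Hh (N1 + N2 + N3)%nat). destruct (Hk (N1 + N2 + N3)%nat).
  simpl in *.
  repeat split; auto; eapply small_pos; eauto.
Qed.

Definition e (n : nat) := / INR (S n).

Lemma e_pos n : 0 < e n.
Proof. unfold e. apply Rinv_0_lt_compat. apply lt_0_INR. lia. Qed.

Lemma e_lim : is_lim_seq e 0.
Proof.
  unfold e.
  assert (H := is_lim_seq_INR). apply is_lim_seq_incr_1 in H.
  apply is_lim_seq_inv in H; [|discriminate]. exact H.
Qed.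

Definition nb (L : Rbar) (n : nat) : R -> Prop :=
  match L with
  | Finite l => fun x => Rabs (x - l) < e n
  | p_infty => fun x => INR n < x
  | m_infty => fun x => x < - INR n
  end.

Lemma nb_loc L n : Rbar_locally L (nb L n).
Proof.
  destruct L as [l| |]; simpl.
  - exists (mkposreal _ (e_pos n)). intros y Hy. rewrite ball_iff in Hy. exact Hy.
  - exists (INR n). auto.
  - exists (- INR n). auto.
Qed.

Lemma A2 f L : C f L -> seq_cord_derivative f L.
Proof.
  intros HC.
  assert (Hex : forall n, exists p : R * R,
    (0 < fst p < e n /\ fst p <= 1) /\ (0 < snd p < e n /\ snd p <= 1) /\
    nb L n (Q f (fst p) (snd p))).
  { intros n. destruct (HC (nb L n) (nb_loc L n) (e n) (e_pos n)) as [h [k H]].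
    exists (h, k). exact H. }
  set (g := fun n => proj1_sig (constructive_indefinite_description _ (Hex n))).
  assert (Hg : forall n, (0 < fst (g n) < e n /\ fst (g n) <= 1) /\
     (0 < snd (g n) < e n /\ snd (g n) <= 1) /\ nb L n (Q f (fst (g n)) (snd (g n)))).
  { intros n. unfold g. apply proj2_sig. }
  exists (fun n => fst (g n)), (fun n => snd (g n)).
  split; [intros n; destruct (Hg n) as [[? ?] _]; split; lra|].
  split; [intros n; destruct (Hg n) as [_ [[? ?] _]]; split; lra|].
  split.
  { apply is_lim_seq_le_le with (fun _ => 0) e; [|apply is_lim_seq_const|apply e_lim].
    intros n; destruct (Hg n) as [[? ?] _]; lra. }
  split.
  { apply is_lim_seq_le_le with (fun _ => 0) e; [|apply is_lim_seq_const|apply e_lim].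
    intros n; destruct (Hg n) as [_ [[? ?] _]]; lra. }
  change (is_lim_seq (fun n => Q f (fst (g n)) (snd (g n))) L).
  destruct L as [l| |].
  - apply is_lim_seq_le_le with (fun n => l - e n) (fun n => l + e n).
    + intros n; destruct (Hg n) as [_ [_ H]]; simpl in H.
      unfold Rabs in H; destruct Rcase_abs in H; lra.
    + assert (H := is_lim_seq_minus' _ _ _ _ (is_lim_seq_const l) e_lim).
      rewrite Rminus_0_r in H; exact H.
    + assert (H := is_lim_seq_plus' _ _ _ _ (is_lim_seq_const l) e_lim).
      rewrite Rplus_0_r in H; exact H.
  - apply is_lim_seq_le_p_loc with INR; [|apply is_lim_seq_INR].
    exists 0%nat; intros n _; destruct (Hg n) as [_ [_ H]]; simpl in H; lra.
  - apply is_lim_seq_le_m_loc with (fun n => - INR n).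
    + exists 0%nat; intros n _; destruct (Hg n) as [_ [_ H]]; simpl in H; lra.
    + assert (H := is_lim_seq_INR). apply is_lim_seq_opp in H. exact H.
Qed.
Lemma C_closed f L : (forall P, Rbar_locally L P -> exists L', C f L' /\ Rbar_locally L' P) -> C f L.
Proof.
  intros H P HP d Hd. destruct (H P HP) as [L' [HC HP']]. apply HC; auto.
Qed.

Definition clamp (x : R) := Rmax (-1) (Rmin 1 x).

Lemma clamp_in x : -1 <= clamp x <= 1.
Proof. unfold clamp, Rmax, Rmin; repeat destruct Rle_dec; lra. Qed.

Lemma clamp_id x : -1 <= x <= 1 -> clamp x = x.
Proof. intros H. unfold clamp, Rmax, Rmin; repeat destruct Rle_dec; lra. Qed.

Lemma clamp_lip x y : Rabs (clamp y - clamp x) <= Rabs (y - x).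
Proof.
  unfold clamp, Rmax, Rmin; repeat destruct Rle_dec; unfold Rabs;
  repeat destruct Rcase_abs; lra.
Qed.

Definition Fx (f : R -> R) x := f (clamp x).

Lemma Fx_cont f : continuous_on_m11 f -> continuity (Fx f).
Proof.
  intros Hf x. apply continuity_pt_filterlim.
  intros P HP.
  destruct (Hf (clamp x) (clamp_in x) P HP) as [eps Heps].
  exists eps. intros y Hy. apply Heps; [|apply clamp_in].
  rewrite ball_iff in *. eapply Rle_lt_trans; [apply clamp_lip|exact Hy].
Qed.

Lemma lt_nbhd a l : Rbar_lt a (Finite l) -> Rbar_locally a (fun x => x < l).
Proof.
  destruct a as [r| |]; simpl; intros H; try contradiction.
  - assert (Hp : 0 < l - r) by lra. exists (mkposreal _ Hp); intros y Hy.
    rewrite ball_iff in Hy; simpl in Hy. unfold Rabs in Hy; destruct Rcase_abs; lra.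
  - exists l; auto.
Qed.

Lemma gt_nbhd b l : Rbar_lt (Finite l) b -> Rbar_locally b (fun x => l < x).
Proof.
  destruct b as [r| |]; simpl; intros H; try contradiction.
  - assert (Hp : 0 < r - l) by lra. exists (mkposreal _ Hp); intros y Hy.
    rewrite ball_iff in Hy; simpl in Hy. unfold Rabs in Hy; destruct Rcase_abs; lra.
  - exists l; auto.
Qed.

Lemma convex_comb z x y d : 0 <= z <= 1 -> 0 < x < d -> x <= 1 -> 0 < y < d -> y <= 1 ->
  0 < (1 - z) * x + z * y < d /\ (1 - z) * x + z * y <= 1.
Proof.
  intros Hz Hx Hx1 Hy Hy1.
  set (m := Rmin x y). set (M := Rmax x y).
  assert (m <= x /\ m <= y /\ 0 < m) by (unfold m, Rmin; destruct Rle_dec; lra).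
  assert (x <= M /\ y <= M /\ M < d /\ M <= 1) by (unfold M, Rmax; destruct Rle_dec; lra).
  assert (0 <= (1 - z) * (x - m)) by (apply Rmult_le_pos; lra).
  assert (0 <= z * (y - m)) by (apply Rmult_le_pos; lra).
  assert (0 <= (1 - z) * (M - x)) by (apply Rmult_le_pos; lra).
  assert (0 <= z * (M - y)) by (apply Rmult_le_pos; lra).
  nra.
Qed.

Lemma C_convex f : continuous_on_m11 f -> forall a b L, C f a -> C f b -> Rbar_lt a L -> Rbar_lt L b -> C f L.
Proof.
  intros Hf a b L Ca Cb HaL HLb.
  destruct L as [l| |]; [| destruct b; simpl in HLb; contradiction | destruct a; simpl in HaL; contradiction].
  intros P HP d Hd.
  assert (Pl : P l) by (apply locally_singleton; exact HP).
  destruct (Ca _ (lt_nbhd a l HaL) d Hd) as [h1 [k1 [[Hh1 Hh1'] [[Hk1 Hk1'] Q1]]]].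
  destruct (Cb _ (gt_nbhd b l HLb) d Hd) as [h2 [k2 [[Hh2 Hh2'] [[Hk2 Hk2'] Q2]]]].
  set (N := fun t => Fx f (h1 + t * (h2 - h1)) - Fx f (- (k1 + t * (k2 - k1)))
                     - l * ((h1 + t * (h2 - h1)) + (k1 + t * (k2 - k1)))).
  assert (NC : continuity N).
  { intros t. unfold N.
    apply continuity_pt_minus; [apply continuity_pt_minus|].
    - apply (continuity_pt_comp (fun t => h1 + t * (h2 - h1)) (Fx f)).
      + apply derivable_continuous_pt; reg.
      + apply Fx_cont; auto.
    - apply (continuity_pt_comp (fun t => - (k1 + t * (k2 - k1))) (Fx f)).
      + apply derivable_continuous_pt; reg.
      + apply Fx_cont; auto.
    - apply derivable_continuous_pt; reg. }
  assert (Fid : forall x, -1 <= x <= 1 -> Fx f x = f x).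
  { intros x Hx; unfold Fx; rewrite clamp_id; auto. }
  assert (N0 : N 0 < 0).
  { unfold N. rewrite !Rmult_0_l, !Rplus_0_r, !Fid by lra.
    unfold Q in Q1. apply (Rmult_lt_compat_r (h1 + k1)) in Q1; [|lra].
    unfold Rdiv in Q1. rewrite Rmult_assoc, Rinv_l in Q1 by lra. lra. }
  assert (N1 : 0 < N 1).
  { unfold N. rewrite !Rmult_1_l.
    replace (h1 + (h2 - h1)) with h2 by ring. replace (k1 + (k2 - k1)) with k2 by ring.
    rewrite !Fid by lra.
    unfold Q in Q2. apply (Rmult_lt_compat_r (h2 + k2)) in Q2; [|lra].
    unfold Rdiv in Q2. rewrite Rmult_assoc, Rinv_l in Q2 by lra. lra. }
  destruct (IVT N 0 1 NC Rlt_0_1 N0 N1) as [z [Hz Nz]].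
  set (h := h1 + z * (h2 - h1)). set (k := k1 + z * (k2 - k1)).
  assert (Hh : 0 < h < d /\ h <= 1).
  { unfold h. replace (h1 + z * (h2 - h1)) with ((1 - z) * h1 + z * h2) by ring.
    apply convex_comb; auto. }
  assert (Hk : 0 < k < d /\ k <= 1).
  { unfold k. replace (k1 + z * (k2 - k1)) with ((1 - z) * k1 + z * k2) by ring.
    apply convex_comb; auto. }
  exists h, k. split; auto. split; auto.
  replace (Q f h k) with l; auto.
  unfold N in Nz. fold h k in Nz. rewrite !Fid in Nz by lra.
  unfold Q. field_simplify_eq; lra.
Qed.

Theorem theorem3p5 (f : R -> R) (Hf : continuous_on_m11 f) :
  (forall L : Rbar, ~ seq_cord_derivative f L) \/
  (exists a : Rbar, forall L : Rbar, seq_cord_derivative f L <-> L = a) \/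
  (exists a b : Rbar, Rbar_lt a b /\
     forall L : Rbar, seq_cord_derivative f L <-> Rbar_closed_interval a b L).
Proof.
  assert (E : forall L, seq_cord_derivative f L <-> C f L) by (intros L; split; [apply A1|apply A2]).
  destruct (structure (C f) (C_closed f) (C_convex f Hf)) as [H|[[a H]|[a [b [Hab H]]]]].
  - left; intros L HL; apply (H L); apply E; auto.
  - right; left; exists a; intros L; rewrite E; auto.
  - right; right; exists a, b; split; auto; intros L; rewrite E; auto.
Qed.
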